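(* Fix an agent index $i$ with prediction horizon $N_i\ge n_i$, and suppose the input applied at time $t$ is $u_i(t) = \kappa_i(x_i(t),w_i(t))$, so that $x_i(t+1) = A_i x_i(t) + B_i u_i(t)$. If $\mathbb{QP}_i(x_i(t),w_i(t))$ is feasible at time $t$, then $\mathbb{QP}_i(x_i(t+1),w_i(t+1))$ is feasible at time $t+1$ for every $w_i(t+1)\in\mathbb{R}^p$, in particular even when $w_i(t+1)\neq S w_i(t)$.
   Context: Agent $i$: $x_i(t+1) = A_i x_i(t) + B_i u_i(t)$, $y_i(t) = C_i x_i(t)$, with $x_i(t)\in\mathbb{R}^{n_i}$, $u_i(t)\in\mathbb{R}^{m_i}$, $y_i(t)\in\mathbb{R}^q$, subject to $[x_i(t)^\top\ u_i(t)^\top]^\top \in \mathbb{Z}_i$. Standing assumptions: $(A_i,B_i)$ controllable; $\mathbb{Z}_i$ a polytope containing the origin in its interior; $K_i$ fixed with $A_i^{c} := A_i + B_i K_i$ Schur. $S\in\mathbb{R}^{p\times p}$, $Q_e\in\mathbb{R}^{q\times p}$ with $S^\rho = I$ for some positive integer $\rho$; for every eigenvalue $\lambda$ of $S$, $\begin{bmatrix} A_i-\lambda I & B_i\\ C_i & \mathbf{0}\end{bmatrix}$ has full row rank. $\Pi_i,\Gamma_i$ satisfy $A_i\Pi_i + B_i\Gamma_i = \Pi_i S$, $C_i\Pi_i = Q_e$; $L_i := \Gamma_i - K_i\Pi_i$. $w_i(t)\in\mathbb{R}^p$ is the reference of agent $i$. Fix $\epsilon_i\in(0,1)$. $\mathcal{O}_\infty^i$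 is the set of $(x,w)$ such that the sequence $x(0)=x$, $w(0)=w$, $x(k+1) = A_i^c x(k) + B_i L_i w(k)$, $w(k+1) = S w(k)$ satisfies $[x(k)^\top\ (K_i x(k) + L_i w(k))^\top]^\top \in (1-\epsilon_i)\mathbb{Z}_i$ for all $k\ge 0$. Weights: $T_i = \sum_{k=1}^{\rho}(S^k)^\top T_i^0 S^k$, $T_i^0$ symmetric positive definite; $Q_i,R_i$ symmetric positive definite; $P_i$ solves $(A_i^c)^\top P_i A_i^c - P_i + Q_i = \mathbf{0}$; $\|z\|_T^2 = z^\top Tz$. MPC problem $\mathbb{QP}_i(x_i(t),w_i(t))$: decision variables $\bar w_i(0|t)\in\mathbb{R}^p$, $v_i(k|t)\in\mathbb{R}^{m_i}$ ($k=0,\dots,N_i-1$); $x_i(0|t) = x_i(t)$, $x_i(k+1|t) = A_i^c x_i(k|t) + B_i L_i \bar w_i(k|t) + B_i v_i(k|t)$, $\bar w_i(k+1|t) = S\bar w_i(k|t)$; constraints $[x_i(k|t)^\top\ (K_i x_i(k|t) + L_i\bar w_i(k|t) + v_i(k|t))^\top]^\top\in\mathbb{Z}_i$ for $k=0,\dots,N_i-1$, and $[x_i(N_i|t)^\top\ \bar w_i(N_i|t)^\top]^\top\in\mathcal{O}_\infty^i$; minimize $\|\bar w_i(0|t)-w_i(t)\|_{T_i}^2 + \sum_{k=0}^{N_i-1}\|x_i(k|t)-\Pi_i\bar w_i(k|t)\|_{Q_i}^2 + \sum_{k=0}^{N_i-1}\|v_i(k|t)\|_{R_i}^2 + \|x_i(N_i|t)-\Pi_i\bar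 w_i(N_i|t)\|_{P_i}^2$. With optimizer $\bar w_i^*(0|t), v_i^*(0|t)$, $\kappa_i(x_i(t),w_i(t)) = K_i x_i(t) + L_i\bar w_i^*(0|t) + v_i^*(0|t)$. *)

(* Defs.v *)
(* scalar field: an arbitrary real closed field R (covers the reals). *)
From HB Require Import structures.
From mathcomp Require Import all_boot all_order all_algebra.
From mathcomp Require Import complex.
Set Implicit Arguments. Unset Strict Implicit. Unset Printing Implicit Defensive.
Import Order.TTheory GRing.Theory Num.Theory.
Local Open Scope ring_scope.

Section Defs.
Variable R : rcfType.

(* Embedding of a real matrix into complex matrices (to speak of complex eigenvalues). *)
Definition toC (k l : nat) (M : 'M[R]_(k, l)) : 'M[R[i]]_(k, l) :=
  map_mx (fun x => (x%:C)%C) M.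

Definition schur (n : nat) (A : 'M[R]_n) : Prop :=
  forall l : R[i], eigenvalue (toC A) l -> `|l| < 1.

Definition controllable (n m : nat) (A : 'M[R]_n) (B : 'M[R]_(n, m)) : Prop :=
  \rank (\mxrow_(k < n) (A ^+ k *m B)) = n.

Definition quad (d : nat) (M : 'M[R]_d) (z : 'cV[R]_d) : R := (z^T *m M *m z) 0 0.
Definition pos_def (d : nat) (M : 'M[R]_d) : Prop :=
  M^T = M /\ forall z : 'cV[R]_d, z != 0 -> 0 < quad M z.

Definition polytope (d : nat) (Z : 'cV[R]_d -> Prop) : Prop :=
  (exists (k : nat) (H : 'M[R]_(k, d)) (h : 'cV[R]_k),
      forall z, Z z <-> forall j, (H *m z) j 0 <= h j 0)
  /\ (exists M : R, forall z, Z z -> forall j, `|z j 0| <= M).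

Definition origin_interior (d : nat) (Z : 'cV[R]_d -> Prop) : Prop :=
  exists r : R, 0 < r /\ forall z : 'cV[R]_d, (forall j, `|z j 0| < r) -> Z z.

Definition scale_set (d : nat) (c : R) (Z : 'cV[R]_d -> Prop) : 'cV[R]_d -> Prop :=
  fun z => exists z', Z z' /\ z = c *: z'.

Fixpoint cl_traj (n m p : nat) (Ac : 'M[R]_n) (B : 'M[R]_(n, m)) (L : 'M[R]_(m, p))
    (S : 'M[R]_p) (x : 'cV[R]_n) (w : 'cV[R]_p) (k : nat) : 'cV[R]_n :=
  match k with
  | 0 => x
  | k'.+1 => Ac *m cl_traj Ac B L S x w k' + B *m L *m (S ^+ k' *m w)
  end.

Definition Oinf (n m p : nat) (A : 'M[R]_n) (B : 'M[R]_(n, m)) (K : 'M[R]_(m, n))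
    (L : 'M[R]_(m, p)) (S : 'M[R]_p) (eps : R) (Z : 'cV[R]_(n + m) -> Prop)
    (x : 'cV[R]_n) (w : 'cV[R]_p) : Prop :=
  forall k : nat,
    scale_set (1 - eps) Z
      (col_mx (cl_traj (A + B *m K) B L S x w k)
              (K *m cl_traj (A + B *m K) B L S x w k + L *m (S ^+ k *m w))).

Fixpoint pred_traj (n m p : nat) (Ac : 'M[R]_n) (B : 'M[R]_(n, m)) (L : 'M[R]_(m, p))
    (S : 'M[R]_p) (x : 'cV[R]_n) (wb0 : 'cV[R]_p) (v : nat -> 'cV[R]_m) (k : nat)
    : 'cV[R]_n :=
  match k with
  | 0 => x
  | k'.+1 => Ac *m pred_traj Ac B L S x wb0 v k' + B *m L *m (S ^+ k' *m wb0)
             + B *m v k'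
  end.

Definition qp_feasible_sol (n m p N : nat) (A : 'M[R]_n) (B : 'M[R]_(n, m))
    (K : 'M[R]_(m, n)) (L : 'M[R]_(m, p)) (S : 'M[R]_p) (eps : R)
    (Z : 'cV[R]_(n + m) -> Prop)
    (x : 'cV[R]_n) (w : 'cV[R]_p) (wb0 : 'cV[R]_p) (v : nat -> 'cV[R]_m) : Prop :=
  let xs := pred_traj (A + B *m K) B L S x wb0 v in
  (forall k : nat, (k < N)%N ->
     Z (col_mx (xs k) (K *m xs k + L *m (S ^+ k *m wb0) + v k)))
  /\ Oinf A B K L S eps Z (xs N) (S ^+ N *m wb0).

Definition qp_feasible (n m p N : nat) (A : 'M[R]_n) (B : 'M[R]_(n, m))
    (K : 'M[R]_(m, n)) (L : 'M[R]_(m, p)) (S : 'M[R]_p) (eps : R)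
    (Z : 'cV[R]_(n + m) -> Prop) (x : 'cV[R]_n) (w : 'cV[R]_p) : Prop :=
  exists (wb0 : 'cV[R]_p) (v : nat -> 'cV[R]_m),
    qp_feasible_sol N A B K L S eps Z x w wb0 v.

Definition qp_cost (n m p N : nat) (A : 'M[R]_n) (B : 'M[R]_(n, m))
    (K : 'M[R]_(m, n)) (L : 'M[R]_(m, p)) (S : 'M[R]_p) (Pi : 'M[R]_(n, p))
    (T : 'M[R]_p) (Q P : 'M[R]_n) (Rw : 'M[R]_m)
    (x : 'cV[R]_n) (w : 'cV[R]_p) (wb0 : 'cV[R]_p) (v : nat -> 'cV[R]_m) : R :=
  let xs := pred_traj (A + B *m K) B L S x wb0 v in
  quad T (wb0 - w)
  + \sum_(k < N) quad Q (xs k - Pi *m (S ^+ k *m wb0))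
  + \sum_(k < N) quad Rw (v k)
  + quad P (xs N - Pi *m (S ^+ N *m wb0)).

Definition qp_optimal (n m p N : nat) (A : 'M[R]_n) (B : 'M[R]_(n, m))
    (K : 'M[R]_(m, n)) (L : 'M[R]_(m, p)) (S : 'M[R]_p) (eps : R)
    (Z : 'cV[R]_(n + m) -> Prop) (Pi : 'M[R]_(n, p))
    (T : 'M[R]_p) (Q P : 'M[R]_n) (Rw : 'M[R]_m)
    (x : 'cV[R]_n) (w : 'cV[R]_p) (wb0 : 'cV[R]_p) (v : nat -> 'cV[R]_m) : Prop :=
  qp_feasible_sol N A B K L S eps Z x w wb0 v /\
  forall (wb0' : 'cV[R]_p) (v' : nat -> 'cV[R]_m),
    qp_feasible_sol N A B K L S eps Z x w wb0' v' ->
    qp_cost N A B K L S Pi T Q P Rw x w wb0 v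
      <= qp_cost N A B K L S Pi T Q P Rw x w wb0' v'.

End Defs.

(* Main.v *)
Require Import Defs.
From HB Require Import structures.
From mathcomp Require Import all_boot all_order all_algebra.
From mathcomp Require Import complex.
From mathcomp Require Import lra.
Import Order.TTheory GRing.Theory Num.Theory.
Local Open Scope ring_scope.

Lemma scale_sub (R : rcfType) d (Z : 'cV[R]_d -> Prop) (c : R) :
  polytope Z -> origin_interior Z -> 0 <= c <= 1 ->
  forall z, scale_set c Z z -> Z z.
Proof.
move=> [[k [H [h HZ]]] _] [r [r0 Hr]] /andP[c0 c1] z [z' [Zz' ->]].
have Z0 : Z 0 by apply: Hr => j; rewrite mxE normr0.
apply/HZ => j.
have := (proj1 (HZ 0) Z0 j); rewrite mulmx0 mxE => h0.
have := (proj1 (HZ z') Zz' j) => hz.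
rewrite linearZ /= mxE.
apply: (le_trans (ler_wpM2l c0 hz)).
by rewrite -[X in _ <= X]mul1r ler_wpM2r.
Qed.

Lemma cl_shift (R : rcfType) n m p (Ac : 'M[R]_n) (B : 'M[R]_(n, m)) (L : 'M[R]_(m, p)) (S : 'M[R]_p) x w k :
  cl_traj Ac B L S x w k.+1 =
  cl_traj Ac B L S (cl_traj Ac B L S x w 1) (S *m w) k.
Proof.
elim: k => [//|k IH].
change (Ac *m cl_traj Ac B L S x w k.+1 + B *m L *m (S ^+ k.+1 *m w) =
  Ac *m cl_traj Ac B L S (cl_traj Ac B L S x w 1) (S *m w) k + B *m L *m (S ^+ k *m (S *m w))).
by rewrite IH exprSr (mulmxA (S ^+ k)).
Qed.

Theorem lemma5 (R : rcfType) (n m q p rho N : nat)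
  (A : 'M[R]_n) (B : 'M[R]_(n, m)) (C : 'M[R]_(q, n))
  (Z : 'cV[R]_(n + m) -> Prop) (K : 'M[R]_(m, n))
  (S : 'M[R]_p) (Qe : 'M[R]_(q, p)) (Pi : 'M[R]_(n, p)) (Gam : 'M[R]_(m, p))
  (eps : R) (T0 T : 'M[R]_p) (Q P : 'M[R]_n) (Rw : 'M[R]_m) :
  (* standing assumptions *)
  (0 < n)%N ->
  controllable A B ->
  polytope Z -> origin_interior Z ->
  schur (A + B *m K) ->
  (0 < rho)%N -> S ^+ rho = 1%:M ->
  (forall l : R[i], eigenvalue (toC S) l ->
     \rank (block_mx (toC A - l%:M) (toC B) (toC C) (0 : 'M[R[i]]_(q, m))) = (n + q)%N) ->
  A *m Pi + B *m Gam = Pi *m S -> C *m Pi = Qe ->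
  0 < eps < 1 ->
  pos_def T0 -> T = \sum_(k < rho) (S ^+ k.+1)^T *m T0 *m S ^+ k.+1 ->
  pos_def Q -> pos_def Rw ->
  (A + B *m K)^T *m P *m (A + B *m K) - P + Q = 0 ->
  (* the lemma *)
  (n <= N)%N ->
  forall (x : 'cV[R]_n) (w : 'cV[R]_p),
    qp_feasible N A B K (Gam - K *m Pi) S eps Z x w ->
  forall (wb0 : 'cV[R]_p) (v : nat -> 'cV[R]_m),
    qp_optimal N A B K (Gam - K *m Pi) S eps Z Pi T Q P Rw x w wb0 v ->
  let u := K *m x + (Gam - K *m Pi) *m wb0 + v 0%N in
  forall w' : 'cV[R]_p,
    qp_feasible N A B K (Gam - K *m Pi) S eps Z (A *m x + B *m u) w'.
Proof.
move=> n0 _ poly oint _ _ _ _ _ _ /andP[e0 e1] _ _ _ _ _ nN x w _ wb0 v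
  [[Hc Ho] _] u w'.
set L := Gam - K *m Pi.
have N0 : (0 < N)%N by apply: leq_trans nN.
pose v' k := if (k.+1 < N)%N then v k.+1 else 0.
exists (S *m wb0), v'.
set xs := pred_traj (A + B *m K) B L S x wb0 v.
set xs' := pred_traj (A + B *m K) B L S (A *m x + B *m u) (S *m wb0) v'.
have Sk : forall k, S ^+ k *m (S *m wb0) = S ^+ k.+1 *m wb0.
  by move=> k; rewrite exprSr (mulmxA (S ^+ k)).
have shift : forall k, (k < N)%N -> xs' k = xs k.+1.
  elim=> [_|k IH kN].
    by rewrite /xs' /xs /= /u /L expr0 mul1mx !mulmxDl !mulmxDr !mulmxA mulmxDl !addrA.
  rewrite /xs' /= -/xs' IH ?(ltnW kN) // Sk /v' kN.
  by [].
have ce : (0 <= 1 - eps <= 1) by apply/andP; split; lra.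
rewrite /qp_feasible_sol -/xs'.
split.
  move=> k kN.
  rewrite shift // Sk.
  case: (ltnP k.+1 N) => kN'.
    by rewrite /v' kN'; apply: Hc.
  have kE : k.+1 = N by apply/eqP; rewrite eqn_leq kN kN'.
  have kF : (k.+1 < N)%N = false by rewrite ltnNge kN'.
  rewrite /v' kF addr0 kE.
  apply: (@scale_sub _ _ Z (1 - eps) poly oint ce).
  by have := Ho 0%N; rewrite /= expr0 mul1mx.
have xsN : xs' N = cl_traj (A + B *m K) B L S (xs N) (S ^+ N *m wb0) 1.
  have [N' NE] : exists N', N = N'.+1 by case: (N) N0 => // N' _; exists N'.
  rewrite [in LHS]NE /xs' /= -/xs' shift; last by rewrite NE.
  by rewrite Sk /v' -NE ltnn mulmx0 addr0 expr0 mul1mx.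
have SN : S ^+ N *m (S *m wb0) = S *m (S ^+ N *m wb0).
  by rewrite Sk exprS (mulmxA S).
rewrite xsN SN => k.
rewrite -cl_shift.
have := Ho k.+1.
by rewrite exprSr (mulmxA (S ^+ k)).
Qed.
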